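(* For every standard tableau $T$ of degree $n\ge2$ in which $2$ precedes $1$ in the reading word, $$\overset{*}{\mathbb B}{}_2^{(1)}T=R_{n-1}\bar\sigma_{n-2}\cdots\bar\sigma_1\,r_{(10\to11)}\,\tau_{-1}T.$$ Moreover, for every word $w$ with $(\mathrm{ev}_a,\mathrm{ev}_{a+1})\in\{(1,2),(2,1)\}$, $\sigma_a(w^R)=(\bar\sigma_aw)^R$, where $w^R=w_n\cdots w_1$ is the reversal of $w=w_1\cdots w_n$.
   Context: Tableaux (French convention: rows of lengths $\lambda_1\ge\lambda_2\ge\cdots$ from bottom to top). A tableau is a filling of a diagram, identified with (shape, reading word), the reading word listing the entries row by row from top row to bottom row, each row left to right; word operators act on tableaux via reading words, keeping the shape. Standard tableau of degree $n$: rows increase left to right, columns increase upwards, entries $1,\dots,n$ each once. $T^t$ is the transpose (reflection of diagram and entries across the main diagonal). Word operators (compositions act right to left): $\tau_{-1}$ subtracts $1$ from every letter; $r_{(ab\to cd)}$ applies to a word whose letters in $\{a,b\}$ are, left to right, exactly one $a$ then one $b$, and replaces them by $c$ and $d$ respectively; $R_a$ deletes all letters (cells) equal to $a$; for a word with $(\mathrm{ev}_a,\mathrm{ev}_{a+1})\in\{(1,2),(2,1)\}$ ($\mathrm{ev}_i$ = number of occurrences of $i$) and $b=a+1$, $\sigma_a$ replaces the subword of letters in $\{a,b\}$, in place, via $aab\leftrightarrow abb$, $aba\leftrightarrow bba$, $baa\leftrightarrow bab$, and $\bar\sigma_a$ replaces it via $aab\leftrightarrow bab$, $aba\leftrightarrow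 abb$, $baa\leftrightarrow bba$. For a standard tableau $T$ of degree $n\ge2$ in which $1$ precedes $2$ in the reading word, $\overset{*}{\mathbb B}{}_2^{(0)}T=R_{n-1}\sigma_{n-2}\cdots\sigma_1r_{(01\to11)}\tau_{-1}T$; for a standard $T$ of degree $n\ge2$ in which $2$ precedes $1$, $\overset{*}{\mathbb B}{}_2^{(1)}T=(\overset{*}{\mathbb B}{}_2^{(0)}T^t)^t$. *)

(* Defs.v *)
From mathcomp Require Import all_boot.

Set Implicit Arguments.
Unset Strict Implicit.
Unset Printing Implicit Defensive.

(* A cell (i, j): row i (row 0 is the bottom row, French convention),
   column j (column 0 is the leftmost). *)
Definition cell := (nat * nat)%type.

Definition rd_le (a b : cell) : bool :=
  (b.1 < a.1) || ((a.1 == b.1) && (a.2 <= b.2)).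

(* The cells of the diagram of la (rows of lengths la_1, la_2, ... from
   bottom to top), listed in reading order. *)
Definition diagram (la : seq nat) : seq cell :=
  flatten [seq [seq (i, j) | j <- iota 0 (nth 0 la i)]
          | i <- rev (iota 0 (size la))].

Definition is_partition (la : seq nat) : bool :=
  sorted geq la && (0 \notin la).

(* A tableau is identified with (shape, reading word): the shape is the list
   of its cells in reading order, the word lists the entries in that order. *)
Definition tableau := (seq cell * seq nat)%type.

Definition tshape (T : tableau) : seq cell := T.1.
Definition tword (T : tableau) : seq nat := T.2.

Definition entry (T : tableau) (c : cell) : nat :=
  nth 0 (tword T) (index c (tshape T)).

Definition standard (n : nat) (T : tableau) : Prop :=
  exists la : seq nat,
    is_partition la /\ sumn la = n /\ tshape T = diagram la /\
    perm_eq (tword T) (iota 1 n) /\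
    (forall i j, (i, j.+1) \in tshape T -> entry T (i, j) < entry T (i, j.+1)) /\
    (forall i j, (i.+1, j) \in tshape T -> entry T (i, j) < entry T (i.+1, j)).

Definition swapc (c : cell) : cell := (c.2, c.1).

Definition transpose (T : tableau) : tableau :=
  let S := sort rd_le (map swapc (tshape T)) in
  (S, [seq entry T (swapc c) | c <- S]).

Definition wact (f : seq nat -> seq nat) (T : tableau) : tableau :=
  (tshape T, f (tword T)).

Definition tau_m1 (w : seq nat) : seq nat := map predn w.

(* r_{(ab -> cd)}: on a word whose letters in {a,b} are, left to right,
   exactly one a then one b, replaces them by c and d respectively.
   (Total extension: every a becomes c, every b becomes d.) *)
Definition rop (a b c d : nat) (w : seq nat) : seq nat :=
  map (fun x => if x == a then c else if x == b then d else x) w.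

Definition Rdel (a : nat) (T : tableau) : tableau :=
  (mask [seq x != a | x <- tword T] (tshape T), filter (predC1 a) (tword T)).

Definition ev (i : nat) (w : seq nat) : nat := count_mem i w.

Definition ev_cond (a : nat) (w : seq nat) : bool :=
  ((ev a w, ev a.+1 w) == (1, 2)) || ((ev a w, ev a.+1 w) == (2, 1)).

Fixpoint fill (P : pred nat) (w s : seq nat) : seq nat :=
  match w with
  | [::] => [::]
  | x :: w' => if P x then head x s :: fill P w' (behead s)
               else x :: fill P w' s
  end.

Definition in_ab (a : nat) : pred nat := fun x => (x == a) || (x == a.+1).

Definition sigma_rule (a : nat) (s : seq nat) : seq nat :=
  let b := a.+1 in
  if s == [:: a; a; b] then [:: a; b; b] else
  if s == [:: a; b; b] then [:: a; a; b] else
  if s == [:: a; b; a] then [:: b; b; a] else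
  if s == [:: b; b; a] then [:: a; b; a] else
  if s == [:: b; a; a] then [:: b; a; b] else
  if s == [:: b; a; b] then [:: b; a; a] else s.

Definition sigmabar_rule (a : nat) (s : seq nat) : seq nat :=
  let b := a.+1 in
  if s == [:: a; a; b] then [:: b; a; b] else
  if s == [:: b; a; b] then [:: a; a; b] else
  if s == [:: a; b; a] then [:: a; b; b] else
  if s == [:: a; b; b] then [:: a; b; a] else
  if s == [:: b; a; a] then [:: b; b; a] else
  if s == [:: b; b; a] then [:: b; a; a] else s.

Definition sigma (a : nat) (w : seq nat) : seq nat :=
  fill (in_ab a) w (sigma_rule a (filter (in_ab a) w)).

Definition sigmabar (a : nat) (w : seq nat) : seq nat :=
  fill (in_ab a) w (sigmabar_rule a (filter (in_ab a) w)).

(* sigma_{n-2} ... sigma_1 (sigma_1 applied first). *)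
Definition sigma_chain (n : nat) (w : seq nat) : seq nat :=
  foldl (fun w k => sigma k w) w (iota 1 (n - 2)).

Definition sigmabar_chain (n : nat) (w : seq nat) : seq nat :=
  foldl (fun w k => sigmabar k w) w (iota 1 (n - 2)).

Definition B0 (n : nat) (T : tableau) : tableau :=
  Rdel n.-1 (wact (sigma_chain n) (wact (rop 0 1 1 1) (wact tau_m1 T))).

Definition B1 (n : nat) (T : tableau) : tableau :=
  transpose (B0 n (transpose T)).

Definition precedes (x y : nat) (w : seq nat) : bool := index x w < index y w.

(* Main.v *)
Require Import Defs.
From mathcomp Require Import all_boot.
From mathcomp Require Import zify.
Set Warnings "-notation-overridden".
Set Implicit Arguments.
Unset Strict Implicit.
Unset Printing Implicit Defensive.

Lemma index_rev_uniq (T : eqType) (s : seq T) x :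
  uniq s -> x \in s -> index x (rev s) = (size s).-1 - index x s.
Proof.
elim: s => [//|y s IH] /= /andP[ys us].
rewrite rev_cons -cats1 index_cat mem_rev inE.
case: eqP => [->|nxy] /=.
  by move=> _; rewrite (negbTE ys) eqxx size_rev addn0 subn0.
move=> xs; rewrite xs IH //.
have -> : (y == x) = false by apply/eqP => E; apply: nxy.
have := index_mem x s; rewrite xs => lt; lia.
Qed.

Lemma fill_map (X : eqType) (P : pred nat) (f : X -> nat) (l : seq X) s :
  uniq l ->
  fill P (map f l) s =
  map (fun c => if P (f c) then nth (f c) s (index c (filter (preim f P) l))
                else f c) l.
Proof.
elim: l s => [//|c l IH] s /= /andP[cl ul].
case: ifP => Pc /=.
  rewrite IH // eqxx; congr (_ :: _).
  apply/eq_in_map => d dl /=.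
  case: ifP => // Pd.
  have -> : (c == d) = false by apply/negbTE; apply: contraNneq cl => ->.
  by case: s => [|? ?] /=; rewrite ?nth_nil.
rewrite IH //; congr (_ :: _); apply/eq_in_map => d dl /=.
Qed.

Definition stepF (rule : nat -> seq nat -> seq nat) (a : nat) (X : eqType)
  (l : seq X) (f : X -> nat) : X -> nat :=
  fun c => let L := filter (preim f (in_ab a)) l in
    if in_ab a (f c) then nth (f c) (rule a (map f L)) (index c L) else f c.

Lemma sigmabar_map a (X : eqType) (l : seq X) f :
  uniq l -> sigmabar a (map f l) = map (stepF sigmabar_rule a l f) l.
Proof. by move=> ul; rewrite /sigmabar filter_map fill_map. Qed.

Lemma sigma_map a (X : eqType) (l : seq X) f :
  uniq l -> sigma a (map f l) = map (stepF sigma_rule a l f) l.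
Proof. by move=> ul; rewrite /sigma filter_map fill_map. Qed.

Lemma sigma_rule_id a s : size s != 3 -> sigma_rule a s = s.
Proof.
move=> ns; have H : forall q : seq nat, size q = 3 -> (s == q) = false.
  by move=> q Hq; apply: contraNF ns => /eqP ->; rewrite Hq.
by rewrite /sigma_rule !H.
Qed.

Lemma sigmabar_rule_id a s : size s != 3 -> sigmabar_rule a s = s.
Proof.
move=> ns; have H : forall q : seq nat, size q = 3 -> (s == q) = false.
  by move=> q Hq; apply: contraNF ns => /eqP ->; rewrite Hq.
by rewrite /sigmabar_rule !H.
Qed.

Lemma size_sigmabar_rule a s : size (sigmabar_rule a s) = size s.
Proof.
have [/eqP|ns] := eqVneq (size s) 3; last by rewrite sigmabar_rule_id.
case: s => [|x [|y [|z [|t s]]]] //= _.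
by rewrite /sigmabar_rule; repeat case: ifP => _.
Qed.

Lemma rule_rev a s : sigma_rule a (rev s) = rev (sigmabar_rule a s).
Proof.
have [/eqP|ns] := eqVneq (size s) 3; last first.
  by rewrite sigma_rule_id ?size_rev // sigmabar_rule_id.
have nab : (a == a.+1) = false by rewrite eqn_leq ltnn andbF.
have nba : (a.+1 == a) = false by rewrite eqn_leq ltnn.
rewrite /sigma_rule /sigmabar_rule.
case: s => [|x [|y [|z [|t s]]]] //= _; rewrite ?rev_cons /= ?eqseq_cons ?andbT.
have [->|xa] := eqVneq x a; [|have [->|xb] := eqVneq x a.+1];
  have [->|ya] := eqVneq y a; try (have [->|yb] := eqVneq y a.+1);
  have [->|za] := eqVneq z a; try (have [->|zb] := eqVneq z a.+1);
  rewrite ?eqxx ?nab ?nba ?(negbTE xa) ?(negbTE xb) ?(negbTE ya) ?(negbTE yb)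
    ?(negbTE za) ?(negbTE zb) /= ?andbF //.
Qed.


Lemma rev_step a (X : eqType) (l u : seq X) (f : X -> nat) :
  uniq u ->
  filter (preim f (in_ab a)) u = rev (filter (preim f (in_ab a)) l) ->
  sigma a (map f u) = map (stepF sigmabar_rule a l f) u.
Proof.
move=> uu HL; rewrite sigma_map //; apply/eq_in_map => c cu.
rewrite /stepF /=; case: ifP => // Pc.
set L := filter _ l; rewrite HL map_rev rule_rev.
have cL : c \in L by rewrite -mem_rev -HL mem_filter /= Pc.
have uL : uniq L by rewrite -rev_uniq -HL filter_uniq.
rewrite index_rev_uniq // nth_rev; last first.
  rewrite size_sigmabar_rule size_map; have := index_mem c L; rewrite cL; move: (index c L) (size L) => i m; lia.
rewrite size_sigmabar_rule size_map; congr nth.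
have := index_mem c L; rewrite cL; rewrite -/L; move: (index c L) (size L) => i m; lia.
Qed.

Lemma part2 (a : nat) (w : seq nat) : sigma a (rev w) = rev (sigmabar a w).
Proof.
set l := iota 0 (size w).
have Ew : w = map (nth 0 w) l by rewrite /l -/(mkseq _ _) mkseq_nth.
rewrite {1}Ew -map_rev (rev_step (l := l)) ?rev_uniq ?iota_uniq //; last by rewrite filter_rev.
by rewrite map_rev -sigmabar_map ?iota_uniq // -Ew.
Qed.


Definition rd_le' (x y : cell) := rd_le (swapc x) (swapc y).

Lemma rd_le_trans : transitive rd_le.
Proof. move=> [y1 y2] [x1 x2] [z1 z2]; rewrite /rd_le /=; lia. Qed.
Lemma rd_le_anti : antisymmetric rd_le.
Proof. move=> [x1 x2] [y1 y2]; rewrite /rd_le /= => H; apply/eqP; rewrite xpair_eqE; lia. Qed.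
Lemma rd_le_total : total rd_le.
Proof. move=> [x1 x2] [y1 y2]; rewrite /rd_le /=; lia. Qed.
Lemma rd_le'_trans : transitive rd_le'.
Proof. move=> [y1 y2] [x1 x2] [z1 z2]; rewrite /rd_le' /rd_le /=; lia. Qed.
Lemma rd_le'_anti : antisymmetric rd_le'.
Proof. move=> [x1 x2] [y1 y2]; rewrite /rd_le' /rd_le /= => H; apply/eqP; rewrite xpair_eqE; lia. Qed.

Definition ideal (S : seq cell) := forall i j i' j' : nat,
  (i, j) \in S -> i' <= i -> j' <= j -> (i', j') \in S.
Definition RS (S : seq cell) (f : cell -> nat) :=
  forall i j : nat, (i, j.+1) \in S -> f (i, j) < f (i, j.+1).
Definition CW (S : seq cell) (f : cell -> nat) :=
  forall i j : nat, (i.+1, j) \in S -> f (i, j) <= f (i.+1, j).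

Lemma mono_row (S : seq cell) (f : cell -> nat) : ideal S -> RS S f ->
  forall i j k : nat, (i, k) \in S -> j < k -> f (i, j) < f (i, k).
Proof.
move=> iS rs i j; elim=> [//|k IH] ik jk.
have ik' : (i, k) \in S by apply: iS ik _ _.
have := rs _ _ ik; rewrite leq_eqVlt in jk; case/orP: jk => [/eqP [->]//|jk].
move=> h; have := IH ik' jk; lia.
Qed.

Lemma mono_col (S : seq cell) (f : cell -> nat) : ideal S -> CW S f ->
  forall i i' j : nat, (i', j) \in S -> i <= i' -> f (i, j) <= f (i', j).
Proof.
move=> iS cw i i' j; elim: i' => [|k IH] ik.
  by rewrite leqn0 => /eqP ->.
rewrite leq_eqVlt; case/orP => [/eqP ->//|lt].
have ik' : (k, j) \in S by apply: iS ik _ _.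
have := cw _ _ ik; have := IH ik' lt; lia.
Qed.

Lemma count2 (S : seq cell) (f : cell -> nat) (x z : cell) (v : nat) :
  uniq S -> x \in S -> z \in S -> x != z -> f x = v -> f z = v ->
  1 < count_mem v (map f S).
Proof.
move=> uS xS zS xz fx fz; rewrite count_map -size_filter.
have : uniq [:: x; z] by rewrite /= inE xz.
move/uniq_leq_size; apply => c; rewrite !inE => /orP[] /eqP ->;
  rewrite mem_filter /= ?fx ?fz eqxx //.
Qed.

Lemma noNE (S : seq cell) (f : cell -> nat) (a : nat) (x y : cell) : uniq S -> ideal S -> RS S f -> CW S f ->
  count_mem a.+1 (map f S) <= 1 ->
  x \in S -> y \in S -> in_ab a (f x) -> in_ab a (f y) ->
  y.1 < x.1 -> y.2 < x.2 -> False.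
Proof.
move: x y => [xi xj] [yi yj] uS iS rs cw c1 xS yS Px Py /= ltij ltj.
have zS : (yi, xj) \in S by apply: iS xS _ _ => //; lia.
have h1 := mono_row iS rs zS ltj.
have h2 := mono_col iS cw xS (ltnW ltij).
move: Px Py; rewrite /in_ab /= => Px Py.
have fx : f (xi, xj) = a.+1 by lia.
have fz : f (yi, xj) = a.+1 by lia.
have xz : (xi, xj) != (yi, xj) by rewrite xpair_eqE; lia.
have := count2 uS xS zS xz fx fz; lia.
Qed.

Lemma rev_L (S U : seq cell) (P : pred cell) :
  sorted rd_le S -> perm_eq U S -> sorted rd_le' U ->
  (forall x y, x \in filter P S -> y \in filter P S -> y.1 < x.1 -> y.2 < x.2 -> False) ->
  filter P U = rev (filter P S).
Proof.
move=> sS pUS sU noNE.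
apply: (sorted_eq rd_le'_trans rd_le'_anti).
- exact: (sorted_filter rd_le'_trans _ sU).
- rewrite rev_sorted.
  apply: (sub_in_sorted (P := mem (filter P S))); last first.
  + exact: (sorted_filter rd_le_trans _ sS).
  + exact: allss.
  move=> x y xL yL; rewrite /rd_le' /rd_le /=.
  have := noNE x y xL yL; move: x y {xL yL} => [x1 x2] [y1 y2] /= h; lia.
- by rewrite perm_sym perm_rev perm_sym; apply: perm_filter.
Qed.


Definition Inv (n : nat) (S : seq cell) (f : cell -> nat) (a : nat) :=
  [/\ RS S f, CW S f, count_mem a (map f S) = 2 &
      forall j : nat, a < j < n -> count_mem j (map f S) = 1].

Definition upd (f : cell -> nat) (x : cell) (v : nat) : cell -> nat :=
  fun c => if c == x then v else f c.

Lemma count_upd (S : seq cell) f x v (j : nat) : uniq S -> x \in S ->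
  count_mem j (map (upd f x v) S) + (f x == j) = count_mem j (map f S) + (v == j).
Proof.
elim: S => //= c S IH /andP[cS uS]; rewrite inE /upd.
case: (c =P x) => [E|ne] /=.
  move=> _; rewrite -E.
  have -> : map (fun c0 => if c0 == c then v else f c0) S = map f S.
    apply/eq_in_map => d dS /=; case: eqP => // E'; by move: dS; rewrite E' (negbTE cS).
  lia.
have -> : (x == c) = false by apply/eqP => E; apply: ne.
move=> xS; have := IH uS xS; rewrite /upd; lia.
Qed.

Lemma pres_gen n S f g a (x : cell) : uniq S -> Inv n S f a -> a.+1 < n ->
  x \in S -> f x = a ->
  ((x.1, x.2.+1) \in S -> f (x.1, x.2.+1) != a.+1) ->
  ((x.1.+1, x.2) \in S -> f (x.1.+1, x.2) != a) ->
  g =1 upd f x a.+1 -> Inv n S g a.+1.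
Proof.
move=> uS [rs cw ca cj] an xS fx hA hB eg.
have eS : map g S = map (upd f x a.+1) S by apply: eq_map.
have nab : (a == a.+1) = false by rewrite eqn_leq ltnn andbF.
split.
- move=> i j ij; rewrite !eg /upd; have := rs _ _ ij.
  case: (eqVneq (i, j) x) => [E|ne1]; case: (eqVneq (i, j.+1) x) => [E'|ne2] //.
  + by move: E'; rewrite -E; case; lia.
  + have := hA; rewrite -E /= => /(_ ij); move: (f (i, j.+1)) => m; rewrite -fx -E; lia.
  + by rewrite E' fx; lia.
- move=> i j ij; rewrite !eg /upd; have := cw _ _ ij.
  case: (eqVneq (i, j) x) => [E|ne1]; case: (eqVneq (i.+1, j) x) => [E'|ne2] //.
  + move=> h; have := hB; rewrite -E /= => /(_ ij) hb; have fij : f (i, j) = a by rewrite E.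
    move: h hb; rewrite fij; move: (f (i.+1, j)) => m; lia.
  + by rewrite E' fx; move: (f (i, j)) => m; lia.
- rewrite eS; have h := count_upd f a.+1 a.+1 uS xS.
  rewrite fx nab eqxx (cj a.+1) in h; last by rewrite ltnSn an.
  move: h; set m := count_mem a.+1 _; move=> h; lia.
- move=> j jn; rewrite eS; have h := count_upd f a.+1 j uS xS.
  rewrite fx (cj j) in h; last by move: jn; clear; lia.
  have e1 : (a == j) = false by apply/eqP; move: jn; clear; lia.
  have e2 : (a.+1 == j) = false by apply/eqP; move: jn; clear; lia.
  rewrite e1 e2 in h; move: h; set m := count_mem j _; move=> h; lia.
Qed.

Lemma stepF_upd a (S : seq cell) f (x : cell) v :
  let L := filter (preim f (in_ab a)) S in
  x \in L -> sigmabar_rule a (map f L) = map (upd f x v) L ->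
  stepF sigmabar_rule a S f =1 upd f x v.
Proof.
move=> L xL HR c; rewrite /stepF -/L HR.
have Px : in_ab a (f x) by move: xL; rewrite mem_filter => /andP[].
case: ifP => Pc.
  case cL: (c \in L).
    by rewrite (nth_map c) ?index_mem // nth_index.
  rewrite nth_default; last by rewrite size_map memNindex ?cL.
  by rewrite /upd; case: eqP => // E; rewrite E xL in cL.
by rewrite /upd; case: eqP => // E; rewrite E Px in Pc.
Qed.

Lemma count_in_ab a (s : seq nat) :
  count (in_ab a) s = count_mem a s + count_mem a.+1 s.
Proof.
elim: s => //= y s ->; rewrite /in_ab /=.
have nab : (a == a.+1) = false by apply/eqP; lia.
case: (eqVneq y a) => [->|ya]; case: (eqVneq y a.+1) => [E|yb] /=.
- by move: E; lia.
- rewrite nab; lia.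
- lia.
- lia.
Qed.

Lemma step_pres n (S : seq cell) f a : uniq S -> ideal S -> sorted rd_le S ->
  Inv n S f a -> a.+1 < n -> Inv n S (stepF sigmabar_rule a S f) a.+1.
Proof.
move=> uS iS sS I an; have I' := I; case: I' => rs cw ca cj.
have cb : count_mem a.+1 (map f S) = 1 by apply: cj; rewrite ltnSn an.
have nab : (a == a.+1) = false by apply/eqP; lia.
have nba : (a.+1 == a) = false by apply/eqP; lia.
pose L := filter (preim f (in_ab a)) S.
have sL : size L = 3 by rewrite size_filter -count_map count_in_ab ca cb.
have uL : uniq L := filter_uniq _ uS.
have soL : sorted rd_le L := sorted_filter rd_le_trans _ sS.
have memL : forall u, (u \in L) = (u \in S) && in_ab a (f u).
  by move=> u; rewrite mem_filter andbC.
have cntL : count_mem a (map f L) = 2.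
  rewrite -ca !count_map count_filter; apply: eq_count => u /=.
  by case: eqP => //= ->; rewrite /in_ab /= eqxx.
have noNE_L : forall x y, x \in L -> y \in L -> y.1 < x.1 -> y.2 < x.2 -> False.
  move=> x y; rewrite !memL => /andP[xS Px] /andP[yS Py].
  by apply: (noNE uS iS rs cw _ xS yS Px Py); rewrite cb.
have [c1 [c2 [c3 EL]]] : exists c1 c2 c3, L = [:: c1; c2; c3].
  by move: sL; case: (L) => [|c1 [|c2 [|c3 [|? ?]]]] // _; exists c1, c2, c3.
have c1L : c1 \in L by rewrite EL !inE eqxx.
have c2L : c2 \in L by rewrite EL !inE eqxx orbT.
have c3L : c3 \in L by rewrite EL !inE eqxx !orbT.
have memval : forall u, u \in S -> f u = a \/ f u = a.+1 -> [\/ u = c1, u = c2 | u = c3].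
  move=> u uS' fu; have : u \in L.
    by rewrite memL uS' /in_ab /=; case: fu => ->; rewrite eqxx ?orbT.
  by rewrite EL !inE => /orP[/eqP->|/orP[/eqP->|/eqP->]]; [constructor 1|constructor 2|constructor 3].
have val : forall u, u \in L -> f u = a \/ f u = a.+1.
  by move=> u; rewrite memL /in_ab /= => /andP[_ /orP[/eqP->|/eqP->]]; [left|right].
have inS : forall u, u \in L -> u \in S by move=> u; rewrite memL => /andP[].
have HS := stepF_upd (a := a) (S := S) (f := f).
rewrite -/L in HS.
move: soL uL cntL; rewrite EL /= !inE !andbT => /andP[r12 r23] /andP[/norP[d12 d13] d23] cnt.
have v1 := val _ c1L; have v2 := val _ c2L; have v3 := val _ c3L.
have c1S := inS _ c1L; have c2S := inS _ c2L; have c3S := inS _ c3L.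
clear val inS memL.
move: c1 c2 c3 EL c1L c2L c3L memval r12 r23 d12 d13 d23 cnt v1 v2 v3 c1S c2S c3S HS
  => [p1 q1] [p2 q2] [p3 q3] EL c1L c2L c3L memval r12 r23 d12 d13 d23 cnt v1 v2 v3 c1S c2S c3S HS.
move: r12 r23 d12 d13 d23; rewrite /rd_le !xpair_eqE /= => r12 r23 d12 d13 d23.
have n21 : ((p2, q2) == (p1, q1)) = false by apply/negbTE; rewrite xpair_eqE; clear -d12; lia.
have n31 : ((p3, q3) == (p1, q1)) = false by apply/negbTE; rewrite xpair_eqE; clear -d13; lia.
have n32 : ((p3, q3) == (p2, q2)) = false by apply/negbTE; rewrite xpair_eqE; clear -d23; lia.
have n12 : ((p1, q1) == (p2, q2)) = false by apply/negbTE; rewrite xpair_eqE; clear -d12; lia.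
have n13 : ((p1, q1) == (p3, q3)) = false by apply/negbTE; rewrite xpair_eqE; clear -d13; lia.
have n23 : ((p2, q2) == (p3, q3)) = false by apply/negbTE; rewrite xpair_eqE; clear -d23; lia.
case: v1 => e1; case: v2 => e2; case: v3 => e3; rewrite ?e1 ?e2 ?e3 ?eqxx ?nba /= in cnt => //.
- (* a a b : x = c1 *)
  apply: (pres_gen (x := (p1, q1)) uS I an c1S e1).
  + move=> /= vS; apply/eqP => fv; case: (memval _ vS (or_intror fv)) => E.
    * by move/(congr1 snd): E => /= h; clear -h; lia.
    * by rewrite E e2 in fv; clear -fv; lia.
    * by move: (congr1 fst E) (congr1 snd E) => /= h1 h2; clear -h1 h2 r12 r23 d12 d23; lia.
  + move=> /= uS'; apply/eqP => fu; case: (memval _ uS' (or_introl fu)) => E.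
    * by move/(congr1 fst): E => /= h; clear -h; lia.
    * by move/(congr1 fst): E => /= h; clear -h r12; lia.
    * by rewrite E e3 in fu; clear -fu; lia.
  + apply: HS => //; rewrite EL /= /upd eqxx n21 n31 e1 e2 e3 /sigmabar_rule /=.
    by rewrite !eqseq_cons ?eqxx ?nab ?nba.
- (* a b a : x = c3 *)
  apply: (pres_gen (x := (p3, q3)) uS I an c3S e3).
  + move=> /= vS; apply/eqP => fv; case: (memval _ vS (or_intror fv)) => E.
    * by rewrite E e1 in fv; clear -fv; lia.
    * by move: (congr1 fst E) (congr1 snd E) => /= h1 h2; clear -h1 h2 r23; lia.
    * by move/(congr1 snd): E => /= h; clear -h; lia.
  + move=> /= uS'; apply/eqP => fu; case: (memval _ uS' (or_introl fu)) => E.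
    * move: (congr1 fst E) (congr1 snd E) => /= h1 h2.
      case: (ltnP q2 q3) => h.
      - have ep : p2 = p3 by clear -h1 h2 h r12 r23 d12 d23; lia.
        subst p2; have := mono_row iS rs c3S h; rewrite e2 e3 => hh; clear -hh; lia.
      - by apply: (noNE_L (p2, q2) (p3, q3) c2L c3L) => /=; clear -h1 h2 h r12 r23 d12 d23; lia.
    * by rewrite E e2 in fu; clear -fu; lia.
    * by move/(congr1 fst): E => /= h; clear -h; lia.
  + apply: HS => //; rewrite EL /= /upd eqxx n13 n23 e1 e2 e3 /sigmabar_rule /=.
    by rewrite !eqseq_cons ?eqxx ?nab ?nba.
- (* b a a : x = c2 *)
  apply: (pres_gen (x := (p2, q2)) uS I an c2S e2).
  + move=> /= vS; apply/eqP => fv; case: (memval _ vS (or_intror fv)) => E.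
    * by move: (congr1 fst E) (congr1 snd E) => /= h1 h2; clear -h1 h2 r12; lia.
    * by move/(congr1 snd): E => /= h; clear -h; lia.
    * by rewrite E e3 in fv; clear -fv; lia.
  + move=> /= uS'; apply/eqP => fu; case: (memval _ uS' (or_introl fu)) => E.
    * by rewrite E e1 in fu; clear -fu; lia.
    * by move/(congr1 fst): E => /= h; clear -h; lia.
    * by move/(congr1 fst): E => /= h; clear -h r23; lia.
  + apply: HS => //; rewrite EL /= /upd eqxx n12 n32 e1 e2 e3 /sigmabar_rule /=.
    by rewrite !eqseq_cons ?eqxx ?nab ?nba.
Qed.


Lemma mem_diagram la (i j : nat) :
  ((i, j) \in diagram la) = (i < size la) && (j < nth 0 la i).
Proof.
apply/flatten_mapP/andP.
- case=> i'; rewrite mem_rev mem_iota => /andP[_ hi] /mapP[j' hj [-> ->]].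
  by rewrite mem_iota in hj; split => //; lia.
- case=> hi hj; exists i; first by rewrite mem_rev mem_iota; lia.
  by apply/mapP; exists j; rewrite ?mem_iota //; lia.
Qed.

Definition rd_lt (x y : cell) := (y.1 < x.1) || ((x.1 == y.1) && (x.2 < y.2)).

Lemma rd_lt_trans : transitive rd_lt.
Proof. move=> [y1 y2] [x1 x2] [z1 z2]; rewrite /rd_lt /=; lia. Qed.

Lemma sorted_rows (t : nat -> nat) (s : seq nat) : sorted ltn s ->
  sorted rd_lt (flatten [seq [seq (i, j) | j <- iota 0 (t i)] | i <- rev s]).
Proof.
move=> ss; rewrite sorted_pairwise; last exact: rd_lt_trans.
have : sorted (fun x y => y < x) (rev s) by rewrite rev_sorted.
rewrite sorted_pairwise; last by move=> ? ? ? /=; lia.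
elim: (rev s) => //= i r IH /andP[ai pr].
rewrite pairwise_cat IH // andbT; apply/andP; split.
  apply/allrelP => x y /mapP[j _ ->] /flatten_mapP[i' i'r /mapP[j' _ ->]].
  by move/allP: ai => /(_ _ i'r) /=; rewrite /rd_lt /=; lia.
rewrite pairwise_map; apply: (@sub_in_pairwise _ _ ltn) => //=.
  by move=> x y _ _; rewrite /rd_lt /=; lia.
rewrite -sorted_pairwise; [exact: iota_ltn_sorted | exact: ltn_trans].
Qed.

Lemma sorted_lt_diagram la : sorted rd_lt (diagram la).
Proof. exact: sorted_rows (iota_ltn_sorted _ _). Qed.

Lemma sorted_diagram la : sorted rd_le (diagram la).
Proof.
apply: sub_sorted (sorted_lt_diagram la) => -[x1 x2] [y1 y2]; rewrite /rd_lt /rd_le /=; lia.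
Qed.

Lemma uniq_diagram la : uniq (diagram la).
Proof.
apply: sorted_uniq (sorted_lt_diagram la); first exact: rd_lt_trans.
by move=> [x1 x2]; rewrite /rd_lt /=; lia.
Qed.

Lemma size_diagram la : size (diagram la) = sumn la.
Proof.
rewrite /diagram size_flatten /shape -map_comp.
rewrite (eq_map (g := nth 0 la)); last by move=> i /=; rewrite size_map size_iota.
by rewrite map_rev sumn_rev -/(mkseq _ _) mkseq_nth.
Qed.

Lemma ideal_diagram la : is_partition la -> ideal (diagram la).
Proof.
move=> /andP[sl _] i j i' j'; rewrite !mem_diagram => /andP[hi hj] hi' hj'.
have hi'' : i' < size la by lia.
rewrite hi'' /=.
have gt : transitive geq by move=> ? ? ? /=; lia.
have gr : reflexive geq by move=> ? /=.
have := sorted_leq_nth gt gr 0 sl; rewrite /prop_in2 => /(_ i' i) /=; rewrite !inE /= => /(_ hi'' hi hi'); lia.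

Qed.



Definition stepB (S : seq cell) (g : cell -> nat) (k : nat) := stepF sigmabar_rule k S g.

Lemma chain_S m a (S : seq cell) f : uniq S ->
  foldl (fun w k => sigmabar k w) (map f S) (iota a m) =
  map (foldl (stepB S) f (iota a m)) S.
Proof.
move=> uS; elim: m a f => [//|m IH] a f /=.
by rewrite sigmabar_map // IH.
Qed.

Lemma chain_U n m a (S U : seq cell) f : uniq S -> ideal S -> sorted rd_le S ->
  perm_eq U S -> sorted rd_le' U -> uniq U -> Inv n S f a -> a + m < n ->
  foldl (fun w k => sigma k w) (map f U) (iota a m) =
  map (foldl (stepB S) f (iota a m)) U.
Proof.
move=> uS iS sS pUS sU uU; elim: m a f => [//|m IH] a f I am /=.
have an : a.+1 < n by lia.
rewrite (rev_step (l := S)) //; last first.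
  apply: rev_L => // x y; rewrite !mem_filter => /andP[Px xS] /andP[Py yS].
  case: I => rs cw _ cj.
  apply: (noNE uS iS rs cw _ xS yS Px Py).
  by rewrite cj // ltnSn an.
apply: IH; last by lia.
exact: step_pres.
Qed.


Lemma swapcK : involutive swapc.
Proof. by case. Qed.

Lemma final (S : seq cell) (g : cell -> nat) (k : nat) : sorted rd_le S ->
  transpose (Rdel k (sort rd_le (map swapc S), map (g \o swapc) (sort rd_le (map swapc S))))
  = Rdel k (S, map g S).
Proof.
move=> sS.
set St := sort rd_le (map swapc S).
rewrite /Rdel /= -!map_comp -!filter_mask !filter_map.
set S2t := filter _ St.
rewrite /transpose /=.
have sh : sort rd_le (map swapc S2t) = [seq x <- S | preim g (predC1 k) x].
  apply: (sorted_eq rd_le_trans rd_le_anti).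
  - exact: (sort_sorted rd_le_total _).
  - exact: (sorted_filter rd_le_trans _ sS).
  rewrite perm_sort /S2t.
  have -> : [seq x <- St | (fun x => g (swapc x) != k) x] = 
            [seq x <- St | preim swapc (fun x => g x != k) x] by [].
  have -> : [seq swapc i | i <- St & preim swapc (fun x0 : cell => g x0 != k) i]
     = [seq x <- map swapc St | g x != k] by rewrite filter_map.
  apply: perm_filter.
  rewrite /St -[X in perm_eq _ X](mapK swapcK S).
  by apply: perm_map; rewrite perm_sort.
have wd : forall c, c \in sort rd_le (map swapc S2t) ->
    entry (S2t, [seq g (swapc i) | i <- S2t]) (swapc c) = g c.
  move=> c; rewrite mem_sort => /mapP[d dS ->]; rewrite /entry /= swapcK.
  by rewrite (nth_map d) ?index_mem // nth_index.
have -> : [seq entry (S2t, [seq (g \o swapc) i | i <- S2t]) (swapc c)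
     | c <- sort rd_le [seq swapc i | i <- S2t]] = map g (sort rd_le (map swapc S2t)).
  by apply/eq_in_map => c /wd.
by rewrite sh.
Qed.


Definition hh (x : nat) : nat := if x <= 2 then 1 else x.-1.

Lemma rop01 (w : seq nat) : rop 0 1 1 1 (tau_m1 w) = map hh w.
Proof. rewrite /rop /tau_m1 -map_comp; apply: eq_map => -[|[|[|x]]] //. Qed.
Lemma rop10 (w : seq nat) : rop 1 0 1 1 (tau_m1 w) = map hh w.
Proof. rewrite /rop /tau_m1 -map_comp; apply: eq_map => -[|[|[|x]]] //. Qed.

Lemma count_zero (p : pred nat) s : (forall x, x \in s -> ~~ p x) -> count p s = 0.
Proof. by move=> H; apply/eqP; rewrite -leqn0 leqNgt -has_count; apply/hasPn. Qed.

Lemma main1 (n : nat) (T : tableau) :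
  2 <= n -> standard n T -> precedes 2 1 (tword T) ->
  B1 n T = Rdel n.-1 (wact (sigmabar_chain n) (wact (rop 1 0 1 1) (wact tau_m1 T))).
Proof.
case: T => S w n2 [la [pl [sn [/= ES [pw [hrow hcol]]]]]] /= prec.
have uS : uniq S by rewrite ES uniq_diagram.
have sS : sorted rd_le S by rewrite ES sorted_diagram.
have iS : ideal S by rewrite ES; apply: ideal_diagram.
have szw : size w = n by rewrite (perm_size pw) size_iota.
have szS : size S = n by rewrite ES size_diagram.
have uw : uniq w by rewrite (perm_uniq pw) iota_uniq.
pose e := fun c => nth 0 w (index c S).
have Ew : w = map e S.
  apply: (@eq_from_nth _ 0); first by rewrite size_map szS szw.
  move=> i iw; rewrite (nth_map (0,0)); last by rewrite szS -szw.
  by rewrite /e index_uniq // szS -szw.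
have eS : forall c, c \in S -> 1 <= e c <= n.
  move=> c cS; have : e c \in iota 1 n.
    by rewrite -(perm_mem pw) /e mem_nth // szw -szS index_mem.
  rewrite mem_iota; lia.
pose f0 := fun c => hh (e c).
have Ef0 : map f0 S = map hh w by rewrite Ew -map_comp.
have I0 : Inv n S f0 1.
  split.
  - move=> i j ij; have ij' : (i, j) \in S by apply: iS ij _ _.
    have := hrow i j ij; rewrite /entry /= -/(e _) -/(e _) => lt.
    have key : ~ (e (i, j) = 1 /\ e (i, j.+1) = 2).
      case=> E1 E2; move: prec; rewrite /precedes.
      have -> : index 1 w = index (i, j) S.
        by rewrite -E1 /e index_uniq // szw -szS index_mem.
      have -> : index 2 w = index (i, j.+1) S.
        by rewrite -E2 /e index_uniq // szw -szS index_mem.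
      move=> h; have := sorted_ltn_index rd_le_trans sS _ _ ij ij' h.
      by rewrite /rd_le /=; lia.
    have := eS _ ij; have := eS _ ij'.
    rewrite /f0 /hh; move: (e (i, j)) (e (i, j.+1)) lt key => x y lt key hx hy.
    case: (leqP x 2) => h1; case: (leqP y 2) => h2; lia.
  - move=> i j ij.
    have := hcol i j ij; rewrite /entry /= -/(e _) -/(e _) => lt.
    rewrite /f0 /hh; move: (e (i, j)) (e (i.+1, j)) lt => x y lt; case: (leqP x 2) => h1; case: (leqP y 2) => h2; lia.
  - rewrite Ef0 count_map (permP pw).
    have -> : iota 1 n = [:: 1, 2 & iota 3 (n - 2)].
      by case: n n2 {szw szS sn eS Ef0 Ew pw} => [|[|n]] //= _; rewrite subn2.
    rewrite /= /hh /= count_zero // => x; rewrite mem_iota /= => hx.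
    case: ifP => hh2; lia.
  - move=> j jn; rewrite Ef0 count_map (permP pw).
    transitivity (count_mem j.+1 (iota 1 n)); last first.
      rewrite count_uniq_mem ?iota_uniq // mem_iota.
      by have -> : (0 < j.+1 < 1 + n) = true by lia.
    apply: eq_in_count => x; rewrite mem_iota /= /hh => hx.
    case: ifP => hh2; apply/eqP/eqP; lia.
pose St := sort rd_le (map swapc S).
pose U := map swapc St.
have pUS : perm_eq U S.
  rewrite /U /St -[X in perm_eq _ X](mapK swapcK S); apply: perm_map.
  by rewrite perm_sort.
have uU : uniq U by rewrite (perm_uniq pUS).
have sU : sorted rd_le' U.
  rewrite /U sorted_map; apply: sub_sorted (sort_sorted rd_le_total _).
  by move=> -[x1 x2] [y1 y2].
pose fN := foldl (stepB S) f0 (iota 1 (n - 2)).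
have HU : sigma_chain n (map f0 U) = map fN U.
  by apply: (chain_U uS iS sS pUS sU uU I0); lia.
have HS : sigmabar_chain n (map f0 S) = map fN S by apply: chain_S.
have -> : B1 n (S, w) = transpose (Rdel n.-1 (St, sigma_chain n (rop 0 1 1 1
   (tau_m1 [seq entry (S, w) (swapc c) | c <- St])))) by [].
rewrite rop01.
have -> : map hh [seq entry (S, w) (swapc c) | c <- St] = map f0 U.
  by rewrite /U -!map_comp.
rewrite HU.
have -> : map fN U = map (fN \o swapc) St by rewrite /U -map_comp.
rewrite final //.
have -> : Rdel n.-1 (wact (sigmabar_chain n) (wact (rop 1 0 1 1) (wact tau_m1 (S, w))))
  = Rdel n.-1 (S, sigmabar_chain n (rop 1 0 1 1 (tau_m1 w))) by [].
by rewrite rop10 -Ef0 HS.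
Qed.

Theorem mainTheorem14 :
  (forall (n : nat) (T : tableau),
      2 <= n -> standard n T -> precedes 2 1 (tword T) ->
      B1 n T =
      Rdel n.-1 (wact (sigmabar_chain n) (wact (rop 1 0 1 1) (wact tau_m1 T))))
  /\
  (forall (a : nat) (w : seq nat),
      ev_cond a w -> sigma a (rev w) = rev (sigmabar a w)).
Proof.
split; first exact: main1.
by move=> a w _; apply: part2.
Qed.
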